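(* For all $\lambda,\mu>0$ and $f\in C(S_{\mathrm u})$, \[ (\lambda-\mu)\,u(R^{\mathrm{co}}_\lambda f,\mu)=u(f,\mu)-u(f,\lambda). \] Equivalently, for every $(i,j)\in\mathcal{IJ}$, \[ \int_{S_{\mathrm u}}(\lambda-\mu)R^{\mathrm{co}}_\mu R^{\mathrm{co}}_\lambda f\,\mathrm d\mathfrak p_{i,j}=\int_{S_{\mathrm u}}R^{\mathrm{co}}_\mu f\,\mathrm d\mathfrak p_{i,j}-\int_{S_{\mathrm u}}R^{\mathrm{co}}_\lambda f\,\mathrm d\mathfrak p_{i,j}. \]
   Context: Let $S_1,\dots,S_N$ be disjoint compact metrizable separable spaces and $A_i$ generators of Feller semigroups (positive contraction semigroups, not necessarily conservative) on $C(S_i)$ with resolvents $R_{\lambda,i}=(\lambda-A_i)^{-1}$. Assume $A_1,\dots,A_M$ ($1\le M\le N$) are not conservative and $A_{M+1},\dots,A_N$ are conservative. For $i\in\mathcal M=\{1,\dots,M\}$, assume the kernel of $A_i$ is trivial and there are continuous functions $\phi^{i,j}$, $j=1,\dots,\kappa(i)$, with $0\le\phi^{i,j}\le 1_{S_i}$, $\lambda R_{\lambda,i}\phi^{i,j}\le\phi^{i,j}$ for all $\lambda>0$, $\lambda R_{\lambda,i}\phi^{i,j}\neq\phi^{i,j}$, and $\sum_{j=1}^{\kappa(i)}\phi^{i,j}=1_{S_i}$. Let $\ell^{i,j}_\lambda=\phi^{i,j}-\lambda R_{\lambda,i}\phi^{i,j}$ (Laplace transforms of exit laws), and $\mathcal{IJ}=\{(i,j):i\in\mathcal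 M,\ 1\le j\le\kappa(i)\}$, $\kappa=\sum_{i\in\mathcal M}\kappa(i)$. Let $S_{\mathrm u}$ be the disjoint union of the $S_i$; functions on $S_i$ are extended by zero to $S_{\mathrm u}$, and $f_i=f1_{S_i}$. Define $R^{\mathrm{du}}_\lambda f=\sum_{i=1}^N R_{\lambda,i}f_i$. Let $\mathfrak p_{i,j}$, $(i,j)\in\mathcal{IJ}$, be Borel sub-probability measures on $S_{\mathrm u}$. Let $N_\lambda:\mathbb R^\kappa\to\mathbb R^\kappa$, $(N_\lambda w)_{i,j}=\sum_{k\in\mathcal M}\sum_{l=1}^{\kappa(k)}w_{k,l}\int_{S_k}\ell^{k,l}_\lambda\,\mathrm d\mathfrak p_{i,j}$; then $\|N_\lambda\|<1$ (max norm) and $M_\lambda=I-N_\lambda$ is invertible. For $f\in C(S_{\mathrm u})$ set $v(f,\lambda)=\big(\int_{S_{\mathrm u}}R^{\mathrm{du}}_\lambda f\,\mathrm d\mathfrak p_{i,j}\big)_{(i,j)\in\mathcal{IJ}}$, $u(f,\lambda)=M_\lambda^{-1}v(f,\lambda)$, and \[ R^{\mathrm{co}}_\lambda f=R^{\mathrm{du}}_\lambda f+\sum_{i\in\mathcal M}\sum_{j=1}^{\kappa(i)}u_{i,j}(f,\lambda)\,\ell^{i,j}_\lambda. \] It holds that $u_{i,j}(f,\lambda)=\int_{S_{\mathrm u}}R^{\mathrm{co}}_\lambda f\,\mathrm d\mathfrak p_{i,j}$. *)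

(* Defs.v *)
From HB Require Import structures.
From mathcomp Require Import all_boot all_order all_algebra.
From mathcomp Require Import all_classical all_reals all_analysis.
Set Implicit Arguments. Unset Strict Implicit. Unset Printing Implicit Defensive.
Import Order.TTheory GRing.Theory Num.Theory.
Import numFieldNormedType.Exports.
Local Open Scope classical_set_scope.
Local Open Scope ring_scope.

Notation borelType X := (g_sigma_algebraType (@open X)).

Section Defs.
Variables (R : realType) (X : topologicalType).

(* C(K), for a clopen piece K of the disjoint union X, viewed (extension by
   zero) as the continuous functions on X vanishing outside K. *)
Definition CK (K : set X) (f : X -> R) : Prop :=
  continuous f /\ (forall x, ~ K x -> f x = 0).

(* T is a Feller semigroup on C(K): strongly continuous semigroup of positive
   linear sup-norm contractions (not necessarily conservative). *)
Definition feller_semigroup (K : set X) (T : R -> (X -> R) -> (X -> R)) : Prop :=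
  (forall t f, 0 <= t -> CK K f -> CK K (T t f)) /\
      (forall t (a : R) f g, 0 <= t -> CK K f -> CK K g ->
         T t (fun x => a * f x + g x) = (fun x => a * T t f x + T t g x)) /\
      (forall f, CK K f -> T 0 f = f) /\
      (forall s t f, 0 <= s -> 0 <= t -> CK K f -> T (s + t) f = T s (T t f)) /\
      (forall t f, 0 <= t -> CK K f -> (forall x, 0 <= f x) ->
         forall x, 0 <= T t f x) /\
      (forall t f (c : R), 0 <= t -> CK K f -> (forall x, `|f x| <= c) ->
         forall x, `|T t f x| <= c) /\
      (forall f, CK K f -> forall e : R, 0 < e -> exists2 d : R, 0 < d &
         forall t, 0 <= t < d -> forall x, `|T t f x - f x| <= e).

Definition gen_limit (T : R -> (X -> R) -> (X -> R)) (f g : X -> R) : Prop :=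
  forall e : R, 0 < e -> exists2 d : R, 0 < d &
    forall t, 0 < t < d -> forall x, `|(T t f x - f x) / t - g x| <= e.

Definition is_generator (K : set X) (T : R -> (X -> R) -> (X -> R))
    (D : set (X -> R)) (A : (X -> R) -> (X -> R)) : Prop :=
  (forall f, D f <-> (CK K f /\ exists g, CK K g /\ gen_limit T f g)) /\
  (forall f, D f -> CK K (A f) /\ gen_limit T f (A f)).

Definition is_resolvent (K : set X) (D : set (X -> R))
    (A : (X -> R) -> (X -> R)) (Rs : R -> (X -> R) -> (X -> R)) : Prop :=
  forall lam : R, 0 < lam ->
    (forall f, CK K f -> D (Rs lam f) /\
       (fun x => lam * Rs lam f x - A (Rs lam f) x) = f) /\
    (forall g, D g -> Rs lam (fun x => lam * g x - A g x) = g).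

Definition conservative (K : set X) (T : R -> (X -> R) -> (X -> R)) : Prop :=
  forall t, 0 <= t -> T t (\1_K) = \1_K.

End Defs.

(* The index set IJ = {(i,j) : i < M, j < kappa i} (0-based indices). *)
Definition IJ (N M : nat) (kappa : 'I_N -> nat) : Type :=
  {x : {i : 'I_N & 'I_(kappa i)} | (tag x < M)%N}.
HB.instance Definition _ N M kappa := Finite.on (@IJ N M kappa).

Section Construction.
Variables (R : realType) (X : ptopologicalType) (N M : nat).
Variables (S : 'I_N -> set X) (Rs : 'I_N -> R -> (X -> R) -> (X -> R)).
Variables (kappa : 'I_N -> nat) (phi : forall i : 'I_N, 'I_(kappa i) -> X -> R).
Variable (p : IJ M kappa -> {measure set (borelType X) -> \bar R}).

Local Notation nIJ := #|{: IJ M kappa}|.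

Definition ell (ij : IJ M kappa) (lam : R) : X -> R :=
  fun x => phi (tagged (val ij)) x - lam * Rs (tag (val ij)) lam (phi (tagged (val ij))) x.

Definition Rdu (lam : R) (f : X -> R) : X -> R :=
  fun x => \sum_(i < N) Rs i lam (fun y => f y * \1_(S i) y) x.

Definition integ (ij : IJ M kappa) (g : X -> R) : R :=
  Rintegral (p ij) [set: borelType X] g.

Definition Nmat (lam : R) : 'M[R]_nIJ :=
  \matrix_(a, b) integ (enum_val a) (ell (enum_val b) lam).

Definition Mmat (lam : R) : 'M[R]_nIJ := 1%:M - Nmat lam.

Definition vvec (f : X -> R) (lam : R) : 'cV[R]_nIJ :=
  \col_a integ (enum_val a) (Rdu lam f).

Definition uvec (f : X -> R) (lam : R) : 'cV[R]_nIJ :=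
  invmx (Mmat lam) *m vvec f lam.

Definition Rco (lam : R) (f : X -> R) : X -> R :=
  fun x => Rdu lam f x + \sum_(a < nIJ) uvec f lam a ord0 * ell (enum_val a) lam x.

End Construction.

(* Main.v *)
Require Import Defs.
From HB Require Import structures.
From mathcomp Require Import all_boot all_order all_algebra.
From mathcomp Require Import all_classical all_reals all_analysis.
From mathcomp.algebra_tactics Require Import ring lra.
Import Order.TTheory GRing.Theory Num.Theory.
Import numFieldNormedType.Exports.
Local Open Scope classical_set_scope.
Local Open Scope ring_scope.

Section Integ.
Variables (R : realType) (X : ptopologicalType).
Hypothesis hX : compact [set: X].
Variable p : {measure set (borelType X) -> \bar R}.
Hypothesis pfin : (p [set: borelType X] < +oo)%E.

Lemma cont_meas (f : X -> R) : continuous f -> measurable_fun [set: borelType X] f.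
Proof.
move=> /continuousP cf; apply: (measurability _ (measurable_realfun.RGenOpens.measurableE R)).
move=> _ [_ [a [b ->] <-]]; apply: sub_sigma_algebra.
rewrite setTI; apply: cf; exact: interval_open.
Qed.

Lemma cont_bnd (f : X -> R) : continuous f -> [bounded f x | x in [set: X]].
Proof.
move=> cf.
have : compact (f @` [set: X] : set R^o).
  apply: continuous_compact => //; exact: continuous_subspaceT.
move=> /(@compact_bounded R R^o) hb.
case: hb => M [Mr HM]; exists M; split => // y My x _ /=.
by apply: (HM y My); exists x.
Qed.

Lemma cont_int (f : X -> R) : continuous f -> p.-integrable [set: borelType X] (EFin \o f).
Proof.
move=> cf; apply: measurable_bounded_integrable => //.
- exact: cont_meas.
- exact: cont_bnd.
Qed.

Lemma Rint_Zl (c : R) (f : X -> R) : continuous f ->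
  Rintegral p [set: borelType X] (fun x => c * f x) = c * Rintegral p [set: borelType X] f.
Proof. by move=> cf; rewrite RintegralZl //; exact: cont_int. Qed.

Lemma Rint_D (f g : X -> R) : continuous f -> continuous g ->
  Rintegral p [set: borelType X] (fun x => f x + g x) =
  Rintegral p [set: borelType X] f + Rintegral p [set: borelType X] g.
Proof. by move=> cf cg; rewrite RintegralD //; exact: cont_int. Qed.

Lemma Rint_B (f g : X -> R) : continuous f -> continuous g ->
  Rintegral p [set: borelType X] (fun x => f x - g x) =
  Rintegral p [set: borelType X] f - Rintegral p [set: borelType X] g.
Proof. by move=> cf cg; rewrite RintegralB //; exact: cont_int. Qed.

Lemma Rint0 : Rintegral p [set: borelType X] (fun _ => 0 : R) = 0.
Proof. by rewrite Rintegral_cst // mul0r. Qed.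

Lemma cont_sumc (I : Type) (r : seq I) (c : I -> R) (g : I -> X -> R) :
  (forall i, continuous (g i)) -> continuous (fun x => \sum_(i <- r) c i * g i x).
Proof.
move=> hg; elim: r => [|i r IH].
  by under eq_fun do rewrite big_nil; move=> x; exact: cvg_cst.
under eq_fun do rewrite big_cons.
move=> x; exact: (continuousD (continuousM (cvg_cst (c i)) (hg i x)) (IH x)).
Qed.

Lemma cont_sum (I : Type) (r : seq I) (g : I -> X -> R) :
  (forall i, continuous (g i)) -> continuous (fun x => \sum_(i <- r) g i x).
Proof.
move=> hg; elim: r => [|i r IH].
  by under eq_fun do rewrite big_nil; move=> x; exact: cvg_cst.
under eq_fun do rewrite big_cons.
move=> x; exact: (continuousD (hg i x) (IH x)).
Qed.

Lemma Rint_sum (I : Type) (r : seq I) (c : I -> R) (g : I -> X -> R) :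
  (forall i, continuous (g i)) ->
  Rintegral p [set: borelType X] (fun x => \sum_(i <- r) c i * g i x) =
  \sum_(i <- r) c i * Rintegral p [set: borelType X] (g i).
Proof.
move=> hg; elim: r => [|i r IH].
  by under eq_fun do rewrite big_nil; rewrite big_nil Rint0.
under eq_fun do rewrite big_cons.
rewrite Rint_D; last exact: cont_sumc.
  by rewrite Rint_Zl // IH big_cons.
move=> x; exact: (continuousM (cvg_cst (c i)) (hg i x)).
Qed.

End Integ.

Set Implicit Arguments. Unset Strict Implicit.

Section Comp.
Variables (R : realType) (X : topologicalType).

Lemma small0 (a : R) : (forall e, 0 < e -> `|a| <= e) -> a = 0.
Proof.
move=> h; apply/eqP; rewrite -normr_eq0; apply/eqP/le_anti; rewrite normr_ge0 andbT.
apply/ler_addgt0Pr => e e0; rewrite add0r; exact: h.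
Qed.

Lemma CK_lin (K : set X) (a : R) f g : CK K f -> CK K g ->
  CK K (fun x => a * f x + g x).
Proof.
move=> [cf zf] [cg zg]; split.
  move=> x; exact: (continuousD (continuousM (cvg_cst a) (cf x)) (cg x)).
by move=> x Kx; rewrite zf // zg // mulr0 addr0.
Qed.

Lemma CK0 (K : set X) : CK K (fun _ => 0 : R).
Proof. by split => // x; exact: cvg_cst. Qed.

Lemma CK_indic (K : set X) : open K -> closed K -> CK K (\1_K : X -> R).
Proof.
move=> oK cK; split; last by move=> x Kx; rewrite indicE memNset.
move=> x; have [Kx|nKx] := pselect (K x).
- apply: (@near_cst_continuous X R (1:R) (\1_K : X -> R) x).
  rewrite openE in oK; move: (oK x Kx) => /=.
  by apply: filterS => y Ky; rewrite indicE mem_set.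
- apply: (@near_cst_continuous X R (0:R) (\1_K : X -> R) x).
  have := closed_openC cK; rewrite openE => /(_ x nKx) /=.
  by apply: filterS => y Ky; rewrite indicE memNset.
Qed.

Lemma CK_mulindic (K : set X) (f : X -> R) : open K -> closed K -> continuous f ->
  CK K (fun y => f y * (\1_K y : R)).
Proof.
move=> oK cK cf; have [ci zi] := CK_indic oK cK; split.
  by move=> x; exact: (continuousM (cf x) (ci x)).
by move=> x Kx; rewrite zi // mulr0.
Qed.

Lemma CK_sum (K : set X) (I : Type) (r : seq I) (c : I -> R) (g : I -> X -> R) :
  (forall i, CK K (g i)) -> CK K (fun x => \sum_(i <- r) c i * g i x).
Proof.
move=> hg; elim: r => [|i r IH].
  by under eq_fun do rewrite big_nil; exact: CK0.
under eq_fun do rewrite big_cons; exact: CK_lin.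
Qed.

Variables (K : set X) (T : R -> (X -> R) -> (X -> R)) (D : set (X -> R))
  (A : (X -> R) -> (X -> R)) (Rs : R -> (X -> R) -> (X -> R)).
Hypotheses (hT : feller_semigroup K T) (hA : is_generator K T D A)
  (hR : is_resolvent K D A Rs).

Lemma gen_unique f g1 g2 : gen_limit T f g1 -> gen_limit T f g2 -> g1 = g2.
Proof.
move=> h1 h2; apply/funext => x; apply/eqP; rewrite -subr_eq0; apply/eqP.
apply: small0 => e e0.
have e20 : 0 < e / 2 by lra.
have [d1 d10 H1] := h1 _ e20; have [d2 d20 H2] := h2 _ e20.
pose t := Num.min d1 d2 / 2.
have t0 : 0 < t by rewrite /t divr_gt0 // lt_min d10 d20.
have tm : t < Num.min d1 d2 by rewrite /t ltr_pdivrMr // ltr_pMr ?lt_min ?d10 ?d20 //; lra.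
have := H1 t; have := H2 t.
rewrite lt_min in tm; case/andP: tm => td1 td2.
rewrite t0 td1 td2 /= => /(_ isT x) a2 /(_ isT x) a1.
set q := (T t f x - f x) / t in a1 a2.
have -> : g1 x - g2 x = - (q - g1 x) + (q - g2 x) by ring.
by apply: (le_trans (ler_normD _ _)); rewrite normrN; lra.
Qed.


Lemma D_CK f : D f -> CK K f.
Proof. by case: hA => h _ /h []. Qed.

Lemma D_lin (a : R) f g : D f -> D g ->
  D (fun x => a * f x + g x) /\ A (fun x => a * f x + g x) = (fun x => a * A f x + A g x).
Proof.
case: hA => hD hAf Df Dg.
have [CAf Lf] := hAf f Df; have [CAg Lg] := hAf g Dg.
have Cf := D_CK Df; have Cg := D_CK Dg.
case: hT => _ [Tlin _].
have L : gen_limit T (fun x => a * f x + g x) (fun x => a * A f x + A g x).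
  move=> e e0.
  have e1 : 0 < e / (2 * (`|a| + 1)) by apply: divr_gt0 => //; rewrite mulr_gt0 // ltr_wpDl.
  have e2 : 0 < e / 2 by lra.
  have [d1 d10 H1] := Lf _ e1; have [d2 d20 H2] := Lg _ e2.
  exists (Num.min d1 d2); first by rewrite lt_min d10 d20.
  move=> t /andP[t0]; rewrite lt_min => /andP[td1 td2] x.
  rewrite (Tlin t a f g (ltW t0) Cf Cg).
  have := H1 t; rewrite t0 td1 => /(_ isT x) a1.
  have := H2 t; rewrite t0 td2 => /(_ isT x) a2.
  set q1 := (T t f x - f x) / t - A f x in a1.
  set q2 := (T t g x - g x) / t - A g x in a2.
  have -> : (a * T t f x + T t g x - (a * f x + g x)) / t - (a * A f x + A g x)
     = a * q1 + q2 by rewrite /q1 /q2; ring.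
  apply: (le_trans (ler_normD _ _)); rewrite normrM.
  have : `|a| * `|q1| <= `|a| * (e / (2 * (`|a| + 1))) by apply: ler_wpM2l.
  have : `|a| * (e / (2 * (`|a| + 1))) <= e / 2.
    rewrite mulrA ler_pdivrMr ?mulr_gt0 ?ltr_wpDl //.
    have := normr_ge0 a; nra.
  lra.
have Dh : D (fun x => a * f x + g x).
  by apply/hD; split; [exact: CK_lin | exists (fun x => a * A f x + A g x); split => //; exact: CK_lin].
split => //.
have [_ Lh] := hAf _ Dh.
exact: gen_unique Lh L.
Qed.

Lemma Rs_D lam f : 0 < lam -> CK K f -> D (Rs lam f).
Proof. by move=> l0 Cf; have [h _] := hR l0; have [] := h f Cf. Qed.

Lemma Rs_eq lam f : 0 < lam -> CK K f -> (fun x => lam * Rs lam f x - A (Rs lam f) x) = f.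
Proof. by move=> l0 Cf; have [h _] := hR l0; have [] := h f Cf. Qed.

Lemma Rs_CK lam f : 0 < lam -> CK K f -> CK K (Rs lam f).
Proof. by move=> l0 Cf; apply: D_CK; exact: Rs_D. Qed.

Lemma Rs_lin lam (a : R) f g : 0 < lam -> CK K f -> CK K g ->
  Rs lam (fun x => a * f x + g x) = (fun x => a * Rs lam f x + Rs lam g x).
Proof.
move=> l0 Cf Cg.
have [Du Au] := D_lin a (Rs_D l0 Cf) (Rs_D l0 Cg).
have [_ h2] := hR l0.
rewrite -[RHS](h2 _ Du) Au; congr (Rs lam); apply/funext => x.
have e1 := congr1 (fun F => F x) (Rs_eq l0 Cf).
have e2 := congr1 (fun F => F x) (Rs_eq l0 Cg).
rewrite /= in e1 e2; rewrite -e1 -e2; ring.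
Qed.

Lemma Rs0 lam : 0 < lam -> Rs lam (fun _ => 0) = (fun _ => 0).
Proof.
move=> l0; have := Rs_lin 1 l0 (CK0 K) (CK0 K).
have -> : (fun _ : X => 1 * (0:R) + 0) = (fun _ => 0) by apply/funext => x; ring.
move=> h; apply/funext => x; have := congr1 (fun F => F x) h => /=; lra.
Qed.

Lemma Rs_sum lam (I : Type) (r : seq I) (c : I -> R) (g : I -> X -> R) :
  0 < lam -> (forall i, CK K (g i)) ->
  Rs lam (fun x => \sum_(i <- r) c i * g i x) = (fun x => \sum_(i <- r) c i * Rs lam (g i) x).
Proof.
move=> l0 Cg; elim: r => [|i r IH].
  by under eq_fun do rewrite big_nil; rewrite Rs0 //; apply/funext => x; rewrite big_nil.
under eq_fun do rewrite big_cons.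
rewrite Rs_lin //; last exact: CK_sum.
by rewrite IH; apply/funext => x; rewrite big_cons.
Qed.

Lemma resolvent_id lam mu f : 0 < lam -> 0 < mu -> CK K f ->
  forall x, (lam - mu) * Rs mu (Rs lam f) x = Rs mu f x - Rs lam f x.
Proof.
move=> l0 m0 Cf x.
have Dg := Rs_D l0 Cf; have Cg := Rs_CK l0 Cf.
have [_ h2] := hR m0.
have E : (fun y => mu * Rs lam f y - A (Rs lam f) y) = (fun y => (mu - lam) * Rs lam f y + f y).
  apply/funext => y; have := congr1 (fun F => F y) (Rs_eq l0 Cf) => /= <-; ring.
have := h2 _ Dg; rewrite E Rs_lin // => /(congr1 (fun F => F x)) /= H.
rewrite -[in RHS]H; ring.
Qed.


Lemma min_principle g x0 : D g -> (forall y, g x0 <= g y) -> g x0 <= 0 -> 0 <= A g x0.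
Proof.
move=> Dg gmin gx0.
case: hT => _ [Tlin [_ [_ [Tpos [Tcontr _]]]]].
have Cg := D_CK Dg; have [cg zg] := Cg.
have Cn : CK K (fun y => `|g y|).
  split; last by move=> y Ky; rewrite zg // normr0.
  move=> y; apply: continuous_comp; [exact: cg | exact: norm_continuous].
pose gm := fun y => (1/2) * `|g y| + (- (1/2) * g y + 0).
have Cgm : CK K gm by apply: CK_lin => //; apply: CK_lin => //; exact: CK0.
pose gp := fun y => 1 * g y + gm y.
have Cgp : CK K gp by exact: CK_lin.
have gp0 : forall y, 0 <= gp y.
  move=> y; rewrite /gp /gm; case: (lerP 0 (g y)) => h.
    by rewrite ger0_norm //; lra.
  by rewrite ltr0_norm //; lra.
have gmb : forall y, `|gm y| <= - g x0.
  move=> y; have := gmin y; have := gp0 y; rewrite /gp /gm.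
  case: (lerP 0 (g y)) => h; [rewrite (ger0_norm h) | rewrite (ltr0_norm h)];
  move=> a b; rewrite ger0_norm; lra.
have Tge : forall t, 0 <= t -> g x0 <= T t g x0.
  move=> t t0; have := Tpos t gp t0 Cgp gp0 x0.
  have := Tcontr t gm (- g x0) t0 Cgm gmb x0.
  rewrite /gp (Tlin t 1 g gm t0 Cg Cgm) /= => /ler_normlP [h1 h2]; lra.
have [_ hAf] := hA; have [_ L] := hAf g Dg.
apply/ler_addgt0Pr => e e0.
have [d d0 Hd] := L e e0.
have t0 : 0 < d / 2 by lra.
have := Hd (d / 2); rewrite t0 /= => /(_ _ x0).
have -> : d / 2 < d by lra.
move=> /(_ isT) /ler_normlP [h1 h2].
have : 0 <= (T (d / 2) g x0 - g x0) / (d / 2).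
  by apply: divr_ge0; [have := Tge _ (ltW t0); lra | exact: ltW].
lra.
Qed.

Hypothesis hX : compact [set: X].

Lemma Rs_indic_pos lam : 0 < lam -> CK K (\1_K : X -> R) -> forall x, K x -> 0 < Rs lam \1_K x.
Proof.
move=> l0 Ci x Kx.
set h := Rs lam \1_K.
have Dh : D h by exact: Rs_D.
have [ch _] := D_CK Dh.
have E : forall y, lam * h y - A h y = \1_K y.
  by move=> y; have := congr1 (fun F => F y) (Rs_eq l0 Ci).
have [x0 _ hmin] : exists2 c, c \in [set: X] & forall t, t \in [set: X] -> h c <= h t.
  apply: compact_EVT_min => //; first by exists x.
  exact: continuous_subspaceT.
have hmin' : forall y, h x0 <= h y by move=> y; apply: hmin; rewrite inE.
have i0 : forall y, 0 <= (\1_K y : R) by move=> y; rewrite indicE ler0n.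
have hx0 : 0 <= h x0.
  case: (lerP 0 (h x0)) => // hn.
  have := min_principle Dh hmin' (ltW hn); have := E x0; have := i0 x0.
  move=> a b c; have : lam * h x0 < 0 by rewrite pmulr_rlt0.
  lra.
rewrite lt_neqAle; apply/andP; split; last exact: le_trans (hmin' x).
apply/eqP => hx.
have hminx : forall y, h x <= h y by move=> y; rewrite -hx; exact: le_trans (hmin' y).
have := min_principle Dh hminx; rewrite -hx lexx => /(_ isT).
have := E x; rewrite -hx indicE mem_set //= mulr0; lra.
Qed.

End Comp.


Lemma unit_IminusN (R : realFieldType) n (N : 'M[R]_n) :
  (forall i j, 0 <= N i j) -> (forall i, \sum_j N i j < 1) -> (1%:M - N) \in unitmx.
Proof.
move=> N0 N1; rewrite unitmxE unitfE -det_tr; apply/negP => /det0P [v v0 hv].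
have [i0 vi0] : exists i0, v 0 i0 != 0.
  apply/not_existsP => h; move/eqP: v0; apply; apply/matrixP => i j.
  rewrite (ord1 i) mxE; have := h j; by move/negP; rewrite negbK => /eqP.
pose b := Order.arg_max i0 xpredT (fun i => `|v 0 i|).
have bmax : forall i, `|v 0 i| <= `|v 0 b|.
  rewrite /b; case: arg_maxP => //= j _ H i; exact: H.
have E : v 0 b = \sum_k v 0 k * N b k.
  move/matrixP: hv => /(_ 0 b); rewrite !mxE.
  under eq_bigr do rewrite !mxE mulrBr.
  rewrite sumrB (bigD1 b) //= eqxx mulr1n big1 ?addr0; last first.
    by move=> k /negPf; rewrite eq_sym => ->; rewrite mulr0n mulr0.
  by move/eqP; rewrite mulr1 subr_eq0 => /eqP.
have : `|v 0 b| <= `|v 0 b| * \sum_k N b k.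
  rewrite {1}E mulr_sumr; apply: (le_trans (ler_norm_sum _ _ _)).
  apply: ler_sum => k _; rewrite normrM (ger0_norm (N0 _ _)).
  by apply: ler_wpM2r => //; exact: bmax.
have := N1 b; have := normr_ge0 (v 0 b); move=> h1 h2 h3.
have vb0 : `|v 0 b| = 0 by nra.
by move: (bmax i0); rewrite vb0 normr_le0 (negPf vi0).
Qed.

Unset Implicit Arguments.


Lemma zmod_id (V : zmodType) (v U a b : V) : v - (U - a) + (b - a) = v - (U - b).
Proof. by rewrite !opprB -addrA; congr (v + _); rewrite addrC -addrA addKr. Qed.

Section Main.
Variables (R : realType) (X : pseudoPMetricType R).
Hypothesis hX : compact [set: X].
Variables (N M : nat) (S : 'I_N -> set X).
Hypotheses (S_open : forall i, open (S i)) (S_closed : forall i, closed (S i))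
  (S_disj : forall i j, i != j -> S i `&` S j = set0)
  (S_cover : \bigcup_(i in [set: 'I_N]) S i = [set: X]).
Variables (T : 'I_N -> R -> (X -> R) -> (X -> R))
  (D : 'I_N -> set (X -> R)) (A : 'I_N -> (X -> R) -> (X -> R))
  (Rs : 'I_N -> R -> (X -> R) -> (X -> R)).
Hypotheses (hT : forall i, feller_semigroup (S i) (T i))
  (hA : forall i, is_generator (S i) (T i) (D i) (A i))
  (hR : forall i, is_resolvent (S i) (D i) (A i) (Rs i)).
Variables (kappa : 'I_N -> nat) (phi : forall i : 'I_N, 'I_(kappa i) -> X -> R).
Hypotheses (phi_cont : forall (i : 'I_N) (j : 'I_(kappa i)), (i < M)%N -> CK (S i) (phi i j))
  (phi_exc : forall (i : 'I_N) (j : 'I_(kappa i)), (i < M)%N -> forall lam : R, 0 < lam ->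
     forall x, lam * Rs i lam (phi i j) x <= phi i j x)
  (phi_sum : forall i : 'I_N, (i < M)%N ->
     forall x, \sum_(j < kappa i) phi i j x = \1_(S i) x).
Variable (p : IJ M kappa -> {measure set (borelType X) -> \bar R}).
Hypothesis (p_sub : forall ij, (p ij [set: borelType X] <= 1)%E).

Set Implicit Arguments. Unset Strict Implicit.
Implicit Types (b : IJ M kappa) (lam mu : R).

Definition tg (b : IJ M kappa) : 'I_N := tag (val b).

Lemma pfin b : (p b [set: borelType X] < +oo)%E.
Proof. exact: le_lt_trans (p_sub b) (ltry 1). Qed.

Lemma S_ex x : exists k, S k x.
Proof.
have : [set: X] x by [].
by rewrite -S_cover => -[k _ Sk]; exists k.
Qed.

Lemma S_uniq i j x : S i x -> S j x -> i = j.
Proof.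
move=> Si Sj; case: (eqVneq i j) => // /S_disj H.
have : (S i `&` S j) x by split.
by rewrite H.
Qed.

Lemma CK_restr k i (g : X -> R) y : CK (S k) g ->
  g y * \1_(S i) y = if k == i then g y else 0.
Proof.
move=> [_ zg]; case: eqP => [<-|ne].
  have [Sy|nSy] := pselect (S k y).
    by rewrite indicE mem_set // mulr1.
  by rewrite zg // mul0r.
have [Sy|nSy] := pselect (S k y); last by rewrite zg // mul0r.
have nSi : ~ S i y by move=> Si; apply: ne; exact: S_uniq Sy Si.
by rewrite indicE memNset // mulr0.
Qed.

Lemma phiCK b : CK (S (tg b)) (phi (tg b) (tagged (val b))).
Proof. exact: phi_cont _ _ (valP b). Qed.

Lemma ellE b lam : ell Rs phi b lam =
  (fun x => (- lam) * Rs (tg b) lam (phi (tg b) (tagged (val b))) x + phi (tg b) (tagged (val b)) x).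
Proof. by apply/funext => x; rewrite /ell /tg; ring. Qed.

Lemma ellCK b lam : 0 < lam -> CK (S (tg b)) (ell Rs phi b lam).
Proof.
move=> l0; rewrite ellE; apply: CK_lin; last exact: phiCK.
exact: (Rs_CK (hA _) (hR _) l0 (phiCK b)).
Qed.

Lemma ell_ge0 b lam x : 0 < lam -> 0 <= ell Rs phi b lam x.
Proof.
move=> l0; rewrite /ell subr_ge0; exact: (phi_exc _ _ (valP b) _ l0 x).
Qed.

Lemma ell_res b lam mu x : 0 < lam -> 0 < mu ->
  (lam - mu) * Rs (tg b) mu (ell Rs phi b lam) x = ell Rs phi b mu x - ell Rs phi b lam x.
Proof.
move=> l0 m0.
have H := resolvent_id (hT (tg b)) (hA (tg b)) (hR (tg b)) l0 m0 (phiCK b) x.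
rewrite ellE (Rs_lin (hT _) (hA _) (hR _) _ m0 (Rs_CK (hA _) (hR _) l0 (phiCK b)) (phiCK b)).
rewrite /ell /=.
have -> : (lam - mu) * (- lam * Rs (tg b) mu (Rs (tg b) lam (phi (tg b) (tagged (sval b)))) x +
   Rs (tg b) mu (phi (tg b) (tagged (sval b))) x) =
  (- lam) * ((lam - mu) * Rs (tg b) mu (Rs (tg b) lam (phi (tg b) (tagged (sval b)))) x) +
  (lam - mu) * Rs (tg b) mu (phi (tg b) (tagged (sval b))) x by ring.
rewrite H /tg; ring.
Qed.


Lemma fCK (f : X -> R) i : continuous f -> CK (S i) (fun y => f y * \1_(S i) y).
Proof. by move=> cf; apply: CK_mulindic. Qed.

Lemma Rdu_cont lam (f : X -> R) : 0 < lam -> continuous f -> continuous (Rdu S Rs lam f).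
Proof.
move=> l0 cf; apply: (@cont_sum R X) => i.
by have [] := Rs_CK (hA i) (hR i) l0 (fCK i cf).
Qed.

Local Notation n := #|{: IJ M kappa}|.

Lemma ell_cont b lam : 0 < lam -> continuous (ell Rs phi b lam).
Proof. by move=> l0; have [] := ellCK b l0. Qed.

Lemma Rco_cont lam (f : X -> R) : 0 < lam -> continuous f ->
  continuous (Rco S Rs phi p lam f).
Proof.
move=> l0 cf x.
have H := @cont_sumc R X _ (index_enum 'I_n) (fun a => uvec S Rs phi p f lam a ord0)
  (fun a => ell Rs phi (enum_val a) lam) (fun a => @ell_cont (enum_val a) lam l0).
rewrite /Rco; exact: (continuousD (@Rdu_cont lam f l0 cf x) (H x)).
Qed.

Section Fixed.
Variables (lam mu : R) (f : X -> R).
Hypotheses (l0 : 0 < lam) (m0 : 0 < mu) (cf : continuous f).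

Let u a := uvec S Rs phi p f lam a ord0.
Let ev (a : 'I_n) : IJ M kappa := enum_val a.

Definition Ei (a : 'I_n) (i : 'I_N) : X -> R :=
  if tg (ev a) == i then ell Rs phi (ev a) lam else (fun _ => 0).

Lemma EiCK a i : CK (S i) (Ei a i).
Proof.
rewrite /Ei; case: eqP => [<-|_]; [exact: ellCK | exact: CK0].
Qed.

Lemma restr_Rco i : (fun y => Rco S Rs phi p lam f y * \1_(S i) y) =
  (fun y => 1 * Rs i lam (fun z => f z * \1_(S i) z) y + \sum_(a < n) u a * Ei a i y).
Proof.
apply/funext => y; rewrite /Rco mulrDl /Rdu !mulr_suml mul1r.
congr (_ + _).
  under eq_bigr => k _ do rewrite (CK_restr i y (Rs_CK (hA k) (hR k) l0 (fCK k cf))).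
  by rewrite -big_mkcond big_pred1_eq.
apply: eq_bigr => a _; rewrite -mulrA (CK_restr i y (ellCK (ev a) l0)) /Ei.
by case: ifP.
Qed.


Lemma Rdu_Rco x : Rdu S Rs mu (Rco S Rs phi p lam f) x =
  \sum_i (1 * Rs i mu (Rs i lam (fun z => f z * \1_(S i) z)) x
          + \sum_(a < n) u a * Rs i mu (Ei a i) x).
Proof.
rewrite /Rdu; apply: eq_bigr => i _; rewrite restr_Rco.
have C1 := Rs_CK (hA i) (hR i) l0 (fCK i cf).
have C2 : CK (S i) (fun y => \sum_(a < n) u a * Ei a i y).
  exact: (CK_sum _ _ (fun a => EiCK a i)).
rewrite (Rs_lin (hT i) (hA i) (hR i) 1 m0 C1 C2) /=.
by rewrite (Rs_sum (hT i) (hA i) (hR i) (index_enum _) u m0 (fun a => EiCK a i)).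
Qed.

Lemma REi a i x : (lam - mu) * Rs i mu (Ei a i) x =
  if tg (ev a) == i then ell Rs phi (ev a) mu x - ell Rs phi (ev a) lam x else 0.
Proof.
rewrite /Ei; case: eqP => [<-|_]; first exact: ell_res.
by rewrite (Rs0 (hT i) (hA i) (hR i) m0) mulr0.
Qed.

Lemma PW x : (lam - mu) * Rdu S Rs mu (Rco S Rs phi p lam f) x =
  (Rdu S Rs mu f x - Rdu S Rs lam f x)
  + \sum_(a < n) u a * (ell Rs phi (ev a) mu x - ell Rs phi (ev a) lam x).
Proof.
rewrite Rdu_Rco mulr_sumr.
have E1 : forall i, (lam - mu) * (1 * Rs i mu (Rs i lam (fun z => f z * \1_(S i) z)) x
          + \sum_(a < n) u a * Rs i mu (Ei a i) x) =
   (Rs i mu (fun z => f z * \1_(S i) z) x - Rs i lam (fun z => f z * \1_(S i) z) x)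
   + \sum_(a < n) u a * (if tg (ev a) == i then ell Rs phi (ev a) mu x - ell Rs phi (ev a) lam x else 0).
  move=> i; rewrite mulrDr mul1r (resolvent_id (hT i) (hA i) (hR i) l0 m0 (fCK i cf) x).
  congr (_ + _); rewrite mulr_sumr; apply: eq_bigr => a _.
  by rewrite mulrCA REi.
rewrite (eq_bigr _ (fun i _ => E1 i)) big_split /= sumrB.
congr (_ + _); rewrite exchange_big /=; apply: eq_bigr => a _.
rewrite -mulr_sumr; congr (_ * _).
rewrite -(big_mkcond (fun i => tg (ev a) == i)) /=.
by rewrite (big_pred1 (tg (ev a))) // => i; rewrite /= eq_sym.
Qed.


Lemma vvec_eq : (lam - mu) *: vvec S Rs p (Rco S Rs phi p lam f) mu =
  vvec S Rs p f mu - vvec S Rs p f lam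
  + (Nmat Rs phi p mu - Nmat Rs phi p lam) *m uvec S Rs phi p f lam.
Proof.
apply/matrixP => b j; rewrite (ord1 j) !mxE /integ.
have cR := Rdu_cont m0 (Rco_cont l0 cf).
rewrite -(@Rint_Zl R X hX (p (ev b)) (pfin _) _ _ cR).
have -> : (fun x => (lam - mu) * Rdu S Rs mu (Rco S Rs phi p lam f) x) =
  (fun x => (Rdu S Rs mu f x - Rdu S Rs lam f x)
  + \sum_(a < n) u a * (ell Rs phi (ev a) mu x - ell Rs phi (ev a) lam x)).
  by apply/funext => x; exact: PW.
have cE : forall a : 'I_n, continuous (fun x => ell Rs phi (ev a) mu x - ell Rs phi (ev a) lam x).
  move=> a x; exact: (continuousB (@ell_cont (ev a) mu m0 x) (@ell_cont (ev a) lam l0 x)).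
rewrite (@Rint_D R X hX (p (ev b)) (pfin _)); last first.
- exact: (@cont_sumc R X _ (index_enum 'I_n) u _ cE).
- move=> x; exact: (continuousB (@Rdu_cont mu f m0 cf x) (@Rdu_cont lam f l0 cf x)).
rewrite (@Rint_B R X hX (p (ev b)) (pfin _) _ _ (Rdu_cont m0 cf) (Rdu_cont l0 cf)).
rewrite (@Rint_sum R X hX (p (ev b)) (pfin _) _ _ u _ cE).
congr (_ + _); apply: eq_bigr => a _; rewrite mulrC; congr (_ * _).
rewrite !mxE /integ (@Rint_B R X hX (p (ev b)) (pfin _) _ _ (@ell_cont (ev a) mu m0) (@ell_cont (ev a) lam l0)).
by [].
Qed.

Hypotheses (Ul : Mmat Rs phi p lam \in unitmx) (Um : Mmat Rs phi p mu \in unitmx).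

Lemma final : (lam - mu) *: uvec S Rs phi p (Rco S Rs phi p lam f) mu
    = uvec S Rs phi p f mu - uvec S Rs phi p f lam.
Proof.
rewrite [X in (lam - mu) *: X]/uvec scalemxAr vvec_eq.
set U := uvec S Rs phi p f lam.
have HV : vvec S Rs p f lam = U - Nmat Rs phi p lam *m U.
  have : Mmat Rs phi p lam *m U = vvec S Rs p f lam.
    by rewrite /U /uvec mulmxA mulmxV // mul1mx.
  by rewrite /Mmat mulmxBl mul1mx => <-.
rewrite HV.
have -> : vvec S Rs p f mu - (U - Nmat Rs phi p lam *m U)
    + (Nmat Rs phi p mu - Nmat Rs phi p lam) *m U
    = vvec S Rs p f mu - Mmat Rs phi p mu *m U.
  by rewrite /Mmat !mulmxBl mul1mx zmod_id.
by rewrite mulmxBr mulmxA mulVmx // mul1mx.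
Qed.

End Fixed.

Lemma ell_vanish b lam x k : 0 < lam -> S k x -> tg b != k -> ell Rs phi b lam x = 0.
Proof.
move=> l0 Sk ne; have [_ z] := ellCK b l0; apply: z => Sb.
by move/negP: ne; apply; rewrite (S_uniq Sb Sk).
Qed.

Lemma Gsum_lt1 lam x : 0 < lam -> \sum_(j < n) ell Rs phi (enum_val j) lam x < 1.
Proof.
move=> l0.
rewrite -(big_enum_val (A := {: IJ M kappa}) (fun b => ell Rs phi b lam x)).
have [k Sk] := S_ex x.
have [hk|hk] := ltnP k M; last first.
  rewrite big1 // => b _; apply: (ell_vanish l0 Sk); apply/eqP => e.
  by have := valP b; rewrite -/(tg b) e ltnNge hk.
pose ij (l : 'I_(kappa k)) : IJ M kappa :=
  @exist _ (fun y : {i : 'I_N & 'I_(kappa i)} => (tag y < M)%N) (Tagged (fun i => 'I_(kappa i)) l) hk.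
have ij_inj : injective ij.
  move=> l1 l2 H; have /= H2 := congr1 sval H; exact: (eq_from_Tagged H2).
pose img : {set IJ M kappa} := (ij @: [set: 'I_(kappa k)])%SET.
rewrite (bigID (fun b => b \in img)) /=.
rewrite [X in _ + X]big1 ?addr0; last first.
  move=> b nb; apply: (ell_vanish l0 Sk); apply: contra nb => /eqP e.
  apply/imsetP; move: b e => [[k' l'] hk'] e; rewrite /tg /= in e; subst k'.
  exists l'; first by rewrite inE.
  by apply: val_inj.
rewrite (eq_bigl (fun b => b \in img)); last by [].
rewrite big_imset /=; last by move=> l1 l2 _ _; exact: ij_inj.
rewrite (eq_bigl xpredT); last by move=> l; rewrite inE.
rewrite /ell /= sumrB -mulr_sumr phi_sum //.
have HR := Rs_sum (hT k) (hA k) (hR k) (index_enum 'I_(kappa k)) (fun _ => 1) l0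
  (fun l => phi_cont k l hk).
have E1 : (fun y => \sum_(l < kappa k) 1 * phi k l y) = \1_(S k).
  by apply/funext => y; under eq_bigr do rewrite mul1r; exact: phi_sum.
rewrite E1 in HR.
have -> : \sum_(l < kappa k) Rs k lam (phi k l) x = Rs k lam \1_(S k) x.
  by rewrite HR; under [RHS]eq_bigr do rewrite mul1r.
have pos := Rs_indic_pos (hT k) (hA k) (hR k) hX l0 (@CK_indic R X _ (S_open k) (S_closed k)) Sk.
rewrite indicE mem_set //.
have : 0 < lam * Rs k lam \1_(S k) x by exact: mulr_gt0.
by move=> h; rewrite /= ltrBlDr ltrDl.
Qed.


Lemma Munit lam : 0 < lam -> Mmat Rs phi p lam \in unitmx.
Proof.
move=> l0; apply: unit_IminusN.
  move=> i j; rewrite mxE /integ; apply: Rintegral_ge0 => x _; exact: ell_ge0.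
move=> i.
pose G := fun x => \sum_(j < n) 1 * ell Rs phi (enum_val j) lam x.
have cE : forall j : 'I_n, continuous (ell Rs phi (enum_val j) lam).
  by move=> j; exact: (@ell_cont (enum_val j) lam l0).
have cG : continuous G := @cont_sumc R X _ _ (fun _ => 1) _ cE.
have E : \sum_j Nmat Rs phi p lam i j = Rintegral (p (enum_val i)) [set: borelType X] G.
  rewrite /G (@Rint_sum R X hX (p (enum_val i)) (pfin _) _ _ _ _ cE).
  by apply: eq_bigr => j _; rewrite mxE mul1r.
have G1 : forall x, G x < 1.
  by move=> x; rewrite /G; under eq_bigr do rewrite mul1r; exact: Gsum_lt1.
have G0 : forall x, 0 <= G x.
  by move=> x; apply: sumr_ge0 => j _; rewrite mul1r; exact: ell_ge0.
have [c [c0 c1 Gc]] : exists c, [/\ 0 <= c, c < 1 & forall x, G x <= c].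
  have [[x0 _]|nX] := pselect (exists x : X, True).
    have [x1 _ H] := @compact_EVT_max X R G [set: X] (ex_intro _ x0 I) hX
      (continuous_subspaceT cG).
    by exists (G x1); split => // x; apply: H; rewrite inE.
  by exists 0; split => // x; exfalso; apply: nX; exists x.
rewrite E.
have P1 := p_sub (enum_val i).
have P0 : (0 <= p (enum_val i) [set: borelType X])%E by exact: measure_ge0.
apply: (@le_lt_trans _ _ c) => //.
apply: (@le_trans _ _ (Rintegral (p (enum_val i)) [set: borelType X] (fun _ => c))).
  apply: le_Rintegral => //.
    exact: (@cont_int R X hX (p (enum_val i)) (pfin _) G cG).
  by apply: (@cont_int R X hX (p (enum_val i)) (pfin _)) => x; exact: cvg_cst.
  by move=> x _; exact: Gc.
rewrite Rintegral_cst //.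
have Pf : p (enum_val i) [set: borelType X] \is a fin_num.
  by rewrite ge0_fin_numE //; exact: pfin.
have f1 : fine (p (enum_val i) [set: borelType X]) <= 1.
  by rewrite -lee_fin fineK.
have f0 : 0 <= fine (p (enum_val i) [set: borelType X]) by exact: fine_ge0.
nra.
Qed.

End Main.

Unset Implicit Arguments.

Theorem lemma2 (R : realType) (X : pseudoPMetricType R)
  (X_hausdorff : hausdorff_space X) (X_compact : compact [set: X])
  (N M : nat) (hM1 : (1 <= M)%N) (hMN : (M <= N)%N)
  (S : 'I_N -> set X)
  (S_open : forall i, open (S i)) (S_closed : forall i, closed (S i))
  (S_disj : forall i j, i != j -> S i `&` S j = set0)
  (S_cover : \bigcup_(i in [set: 'I_N]) S i = [set: X])
  (T : 'I_N -> R -> (X -> R) -> (X -> R))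
  (D : 'I_N -> set (X -> R)) (A : 'I_N -> (X -> R) -> (X -> R))
  (Rs : 'I_N -> R -> (X -> R) -> (X -> R))
  (hT : forall i, feller_semigroup (S i) (T i))
  (hA : forall i, is_generator (S i) (T i) (D i) (A i))
  (hR : forall i, is_resolvent (S i) (D i) (A i) (Rs i))
  (h_noncons : forall i : 'I_N, (i < M)%N -> ~ conservative (S i) (T i))
  (h_cons : forall i : 'I_N, (M <= i)%N -> conservative (S i) (T i))
  (h_ker : forall i : 'I_N, (i < M)%N ->
     forall f, D i f -> A i f = (fun _ => 0) -> f = (fun _ => 0))
  (kappa : 'I_N -> nat) (phi : forall i : 'I_N, 'I_(kappa i) -> X -> R)
  (phi_cont : forall (i : 'I_N) j, (i < M)%N -> CK (S i) (phi i j))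
  (phi_bnd : forall (i : 'I_N) j, (i < M)%N ->
     forall x, 0 <= phi i j x <= \1_(S i) x)
  (phi_exc : forall (i : 'I_N) j, (i < M)%N -> forall lam : R, 0 < lam ->
     forall x, lam * Rs i lam (phi i j) x <= phi i j x)
  (phi_nontriv : forall (i : 'I_N) j, (i < M)%N -> forall lam : R, 0 < lam ->
     (fun x => lam * Rs i lam (phi i j) x) <> phi i j)
  (phi_sum : forall i : 'I_N, (i < M)%N ->
     forall x, \sum_(j < kappa i) phi i j x = \1_(S i) x)
  (p : IJ M kappa -> {measure set (borelType X) -> \bar R})
  (p_sub : forall ij, (p ij [set: borelType X] <= 1)%E) :
  forall (lam mu : R), 0 < lam -> 0 < mu -> forall f : X -> R, continuous f ->
    (lam - mu) *: uvec S Rs phi p (Rco S Rs phi p lam f) mu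
    = uvec S Rs phi p f mu - uvec S Rs phi p f lam.
Proof.
move=> lam mu l0 m0 f cf.
have Ul := Munit X_compact S_open S_closed S_disj S_cover hT hA hR phi_cont phi_exc phi_sum p_sub l0.
have Um := Munit X_compact S_open S_closed S_disj S_cover hT hA hR phi_cont phi_exc phi_sum p_sub m0.
exact: (final X_compact S_open S_closed S_disj hT hA hR phi_cont p_sub l0 m0 cf Ul Um).
Qed.
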